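(* Let $\epsilon\in(0,1)$. Suppose $W=(W_1,\dots,W_n)\in\{0,1\}^n$ satisfies the $\epsilon$-martingale condition, and let $B=(B_1,\dots,B_n)\in\{0,1\}^n$ have independent coordinates with $\Pr[B_i=1]=(1-\epsilon)/2$. Let $R_\infty$ be a random variable on $\{0,1,2,\dots\}$ with \[ \Pr[R_\infty=k]=\frac{2\epsilon}{1+\epsilon}\left(\frac{1-\epsilon}{1+\epsilon}\right)^k,\qquad k=0,1,2,\dots. \] Then $\rho(W)\preceq\rho(B)\preceq R_\infty$, i.e., $\rho(B)$ stochastically dominates $\rho(W)$ and $R_\infty$ stochastically dominates $\rho(B)$.
   Context: Characteristic strings and forks. For $w=w_1\dots w_n\in\{0,1\}^n$ (index $i$ honest if $w_i=0$, adversarial if $w_i=1$), a fork for $w$ is a rooted tree with edges directed away from the root $r$ and labeling $\ell:V\to\{0,\dots,n\}$ with (F1) $\ell(r)=0$; (F2) labels strictly increasing along directed paths; (F3) each honest index labels exactly one vertex; (F4) for honest $i<j$ the vertex labeled $i$ has strictly smaller depth than the vertex labeled $j$. A vertex is honest if it is the root or labeled by an honest index. A tine is a directed path from the root; its length is its number of edges, $\ell(t)$ the label of its last vertex. A fork is closed if every leaf is honest; a closed fork has a unique longest tine $\hat t$. For closed $F$ and tine $t$: $\mathrm{gap}(t)=\mathrm{length}(\hat t)-\mathrm{length}(t)$, $\mathrm{reserve}(t)=|\{i:w_i=1,\ i>\ell(t)\}|$, $\mathrm{reach}(t)=\mathrm{reserve}(t)-\mathrm{gap}(t)$; $\rho(F)=\max_t\mathrm{reach}(t)$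 and $\rho(w)=\max\{\rho(F):F \text{ a closed fork for } w\}$. A random variable $W\in\{0,1\}^n$ satisfies the $\epsilon$-martingale condition if for every $t$, $\Pr[W_t=1\mid W_1,\dots,W_{t-1}]\le(1-\epsilon)/2$ for arbitrary conditioning values. For real random variables, $Y\preceq X$ ($X$ stochastically dominates $Y$) means $\Pr[X\ge\Lambda]\ge\Pr[Y\ge\Lambda]$ for every $\Lambda\in\mathbb{R}$. *)

(* Defs.v *)
From HB Require Import structures.
From mathcomp Require Import all_boot all_order all_algebra.
From mathcomp Require Import all_classical all_reals all_analysis.
Set Implicit Arguments. Unset Strict Implicit. Unset Printing Implicit Defensive.
Import Order.TTheory GRing.Theory Num.Theory.
Local Open Scope ring_scope.

(* w : n.-tuple bool; the 1-based index i (1 <= i <= n) has bit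
   w_i = nth false w i.-1 ; true = adversarial (1), false = honest (0). *)
Definition wbit n (w : n.-tuple bool) (i : nat) : bool := nth false w i.-1.

Definition honest_idx n (w : n.-tuple bool) (i : nat) : bool :=
  (0 < i <= n)%N && ~~ wbit w i.

(* A fork with m.+1 vertices 'I_m.+1, root = ord0, given by a parent map
   [par] (edges par v -> v, directed away from the root) and labeling [lab].
   Requiring par v < v for v <> root makes this exactly a rooted tree. *)
Section Fork.
Variables (m : nat) (par : 'I_m.+1 -> 'I_m.+1) (lab : 'I_m.+1 -> nat).

Fixpoint depth_aux (k : nat) (v : 'I_m.+1) : nat :=
  match k with
  | 0 => 0
  | k'.+1 => if v == ord0 then 0 else (depth_aux k' (par v)).+1
  end.

Definition depth (v : 'I_m.+1) : nat := depth_aux v v.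

Definition is_leaf (v : 'I_m.+1) : bool :=
  [forall c : 'I_m.+1, (c != ord0) ==> (par c != v)].

End Fork.

Definition is_fork n (w : n.-tuple bool) m (par : 'I_m.+1 -> 'I_m.+1)
    (lab : 'I_m.+1 -> nat) : Prop :=
  (forall v : 'I_m.+1, v != ord0 -> (par v < v)%N) /\
  (forall v, (lab v <= n)%N) /\
  lab ord0 = 0%N /\
  (forall v : 'I_m.+1, v != ord0 -> (lab (par v) < lab v)%N) /\
  (forall i, honest_idx w i -> #|[set v | lab v == i]| = 1%N) /\
  (forall u v, honest_idx w (lab u) -> honest_idx w (lab v) ->
     (lab u < lab v)%N -> (depth par u < depth par v)%N).

Definition honest_vertex n (w : n.-tuple bool) m (lab : 'I_m.+1 -> nat)
    (v : 'I_m.+1) : bool := (v == ord0) || honest_idx w (lab v).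

Definition is_closed_fork n (w : n.-tuple bool) m (par : 'I_m.+1 -> 'I_m.+1)
    (lab : 'I_m.+1 -> nat) : Prop :=
  is_fork w par lab /\
  (forall v, is_leaf par v -> honest_vertex w lab v).

(* A tine is identified with its terminal vertex v: length = depth v,
   ell(t) = lab v. *)
Definition max_length m (par : 'I_m.+1 -> 'I_m.+1) : nat :=
  \max_(v : 'I_m.+1) depth par v.

Definition gap m (par : 'I_m.+1 -> 'I_m.+1) (v : 'I_m.+1) : nat :=
  (max_length par - depth par v)%N.

Definition reserve n (w : n.-tuple bool) m (lab : 'I_m.+1 -> nat)
    (v : 'I_m.+1) : nat :=
  #|[set i : 'I_n | wbit w i.+1 & (lab v < i.+1)%N]|.

Definition reach n (w : n.-tuple bool) m (par : 'I_m.+1 -> 'I_m.+1)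
    (lab : 'I_m.+1 -> nat) (v : 'I_m.+1) : int :=
  (reserve w lab v)%:Z - (gap par v)%:Z.

Definition rhoF n (w : n.-tuple bool) m (par : 'I_m.+1 -> 'I_m.+1)
    (lab : 'I_m.+1 -> nat) : int :=
  \big[Order.max/reach w par lab ord0]_(v : 'I_m.+1) reach w par lab v.

(* rho(w) = max of rho(F) over closed forks F for w (taken as a sup in R;
   the set is nonempty and bounded above by n, so it is attained) *)
Definition rho (R : realType) n (w : n.-tuple bool) : R :=
  sup [set x : R | exists m (par : 'I_m.+1 -> 'I_m.+1) (lab : 'I_m.+1 -> nat),
         is_closed_fork w par lab /\ x = (rhoF w par lab)%:~R].

Definition is_pmf (R : realType) n (p : n.-tuple bool -> R) : Prop :=
  (forall w, 0 <= p w) /\ \sum_(w : n.-tuple bool) p w = 1.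

Definition prefix_prob (R : realType) n (p : n.-tuple bool -> R)
    (x : seq bool) : R :=
  \sum_(w : n.-tuple bool | take (size x) w == x) p w.

(* eps-martingale condition: for every t (0 <= t < n) and every prefix x of
   length t, Pr[W_1..W_t = x, W_{t+1} = 1] <= (1-eps)/2 * Pr[W_1..W_t = x]
   (i.e. Pr[W_{t+1}=1 | W_1..W_t = x] <= (1-eps)/2 whenever defined). *)
Definition martingale_cond (R : realType) (eps : R) n
    (p : n.-tuple bool -> R) : Prop :=
  forall x : seq bool, (size x < n)%N ->
    prefix_prob p (rcons x true) <= (1 - eps) / 2 * prefix_prob p x.

Definition B_law_pmf (R : realType) (eps : R) n (w : n.-tuple bool) : R :=
  \prod_(i < n) (if tnth w i then (1 - eps) / 2 else 1 - (1 - eps) / 2).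

Definition rho_tail (R : realType) n (p : n.-tuple bool -> R) (L : R) : R :=
  \sum_(w : n.-tuple bool | L <= rho R w) p w.

Definition Rinf_pmf (R : realType) (eps : R) (k : nat) : R :=
  (2 * eps / (1 + eps)) * ((1 - eps) / (1 + eps)) ^+ k.

Definition Rinf_tail (R : realType) (eps : R) (L : R) : \bar R :=
  (\sum_(k <oo | (L <= k%:R)%R) (Rinf_pmf eps k)%:E)%E.

(* Main.v *)
Require Import Defs.
From HB Require Import structures.
From mathcomp Require Import all_boot all_order all_algebra.
From mathcomp Require Import all_classical all_reals all_analysis.
From mathcomp Require Import zify.
From mathcomp Require Import ring lra.
Set Implicit Arguments. Unset Strict Implicit. Unset Printing Implicit Defensive.
Import Order.TTheory GRing.Theory Num.Theory.
Local Open Scope ring_scope.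


Section Comb.
Variables (n : nat) (w : n.-tuple bool).

Definition cA a b := count (wbit w) (iota a.+1 (b - a)).
Definition cH a b := count (fun i => ~~ wbit w i) (iota a.+1 (b - a)).

Lemma cA_split a b c : (a <= b <= c)%N -> cA a c = (cA a b + cA b c)%N.
Proof.
move=> /andP[ab bc]; rewrite /cA -count_cat.
have -> : (c - a = (b - a) + (c - b))%N by lia.
by rewrite iotaD; have -> : (a.+1 + (b - a) = b.+1)%N by lia.
Qed.

Lemma cH_split a b c : (a <= b <= c)%N -> cH a c = (cH a b + cH b c)%N.
Proof.
move=> /andP[ab bc]; rewrite /cH -count_cat.
have -> : (c - a = (b - a) + (c - b))%N by lia.
by rewrite iotaD; have -> : (a.+1 + (b - a) = b.+1)%N by lia.
Qed.

Lemma cA_last a c : (a < c)%N -> cA a c = (cA a c.-1 + wbit w c)%N.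
Proof.
move=> ac; rewrite (@cA_split a c.-1 c); last by lia.
rewrite /cA; have -> : (c - c.-1 = 1)%N by lia.
by rewrite prednK ?(leq_ltn_trans _ ac) //= addn0.
Qed.

Lemma cH_last a c : (a < c)%N -> cH a c = (cH a c.-1 + ~~ wbit w c)%N.
Proof.
move=> ac; rewrite (@cH_split a c.-1 c); last by lia.
rewrite /cH; have -> : (c - c.-1 = 1)%N by lia.
by rewrite prednK ?(leq_ltn_trans _ ac) //= addn0.
Qed.

Lemma cA0 a : cA a a = 0%N.
Proof. by rewrite /cA subnn. Qed.
Lemma cH0 a : cH a a = 0%N.
Proof. by rewrite /cH subnn. Qed.

Definition Sn : nat := \max_(a < n.+1) (cA a n - cH a n)%N.

Lemma D_le_Sn a : (a <= n)%N -> (cA a n)%:Z - (cH a n)%:Z <= (Sn%:Z).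
Proof.
move=> an; have an' : (a < n.+1)%N by [].
have := @leq_bigmax _ (fun a : 'I_n.+1 => (cA a n - cH a n)%N) (Ordinal an').
rewrite -/Sn /= => h; lia.
Qed.

Lemma card_ordP (k : nat) (P : pred nat) : #|[set i : 'I_k | P i]| = count P (iota 0 k).
Proof.
rewrite cardsE cardE /enum_mem size_filter -val_enum_ord count_map.
by rewrite enumT; apply: eq_count => i.
Qed.

Lemma count_shift (P : pred nat) a k : count (fun i => P i.+1) (iota a k) = count P (iota a.+1 k).
Proof. by rewrite -addn1 addnC (iotaDl 1 a) count_map. Qed.

Lemma reserveE m (lab : 'I_m.+1 -> nat) v : (lab v <= n)%N ->
  reserve w lab v = cA (lab v) n.
Proof.
move=> hv; rewrite /reserve (card_ordP n (fun i => wbit w i.+1 && (lab v < i.+1)%N)).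
rewrite (count_shift (fun i => wbit w i && (lab v < i)%N)) /cA.
rewrite (_ : iota 1 n = iota 1 (lab v) ++ iota (1 + lab v) (n - lab v)); last first.
  by rewrite -iotaD; congr iota; lia.
rewrite count_cat.
rewrite (eq_in_count (a2 := pred0)); last first.
  by move=> i; rewrite mem_iota /= => /andP[_ h]; apply/negbTE; rewrite negb_and -leqNgt; lia.
rewrite count_pred0 add0n; apply: eq_in_count => i; rewrite mem_iota => /andP[h _].
by rewrite /= h andbT.
Qed.

Section ForkL.
Variables (m : nat) (par : 'I_m.+1 -> 'I_m.+1) (lab : 'I_m.+1 -> nat).
Hypothesis parlt : forall v : 'I_m.+1, v != ord0 -> (par v < v)%N.

Lemma depth_aux_fuel k1 k2 (v : 'I_m.+1) : (v <= k1)%N -> (v <= k2)%N ->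
  depth_aux par k1 v = depth_aux par k2 v.
Proof.
elim: k1 k2 v => [|k1 IH] [|k2] v /= h1 h2.
- by [].
- by have -> : v = ord0 by apply: val_inj => /=; lia.
- by have -> : v = ord0 by apply: val_inj => /=; lia.
- case: eqP => // /eqP hv; congr S; apply: IH; have := parlt hv; lia.
Qed.

Lemma depthE v : v != ord0 -> depth par v = (depth par (par v)).+1.
Proof.
move=> hv; rewrite /depth; case: v hv => [[|k] hk] hv //=.
congr S; apply: depth_aux_fuel => //; have := parlt hv => /=; lia.
Qed.

Lemma depth0 : depth par ord0 = 0%N.
Proof. by []. Qed.

Lemma depth_pos v : v != ord0 -> (0 < depth par v)%N.
Proof. by move=> hv; rewrite depthE. Qed.

Lemma depth_le_max v : (depth par v <= max_length par)%N.
Proof. exact: (@leq_bigmax _ (fun v => depth par v)). Qed.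
End ForkL.

Section ForkB.
Variables (m : nat) (par : 'I_m.+1 -> 'I_m.+1) (lab : 'I_m.+1 -> nat).
Hypothesis F : is_fork w par lab.

Lemma up1 v : exists u, [/\ honest_vertex w lab u, (lab u <= lab v)%N &
   (depth par v <= depth par u + cA (lab u) (lab v))%N].
Proof.
case: F => [parlt [labn [lab0 [labinc _]]]].
have: forall k (v : 'I_m.+1), (v < k)%N -> exists u, [/\ honest_vertex w lab u, (lab u <= lab v)%N &
   (depth par v <= depth par u + cA (lab u) (lab v))%N]; last by move/(_ v.+1 v); apply.
elim=> [|k IH] {}v // hv.
case hh: (honest_vertex w lab v).
  by exists v; split => //; rewrite cA0 addn0.
have v0 : v != ord0 by apply: contraFN hh => /eqP ->; rewrite /honest_vertex eqxx.
have [u [hu lu du]] := IH (par v) (leq_trans (parlt v v0) hv).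
have lp := labinc v v0.
exists u; split => //; first by apply: leq_trans lu (ltnW lp).
rewrite (depthE parlt v0) (@cA_split (lab u) (lab (par v)) (lab v)); last by rewrite lu ltnW.
have : (0 < cA (lab (par v)) (lab v))%N.
  rewrite cA_last //; move: hh; rewrite /honest_vertex (negbTE v0) /honest_idx /=.
  case: (wbit w (lab v)) => /=; first by rewrite addn1.
  by rewrite andbT (labn v) andbT; case: (lab v) lp.
lia.
Qed.

Lemma up2 u : honest_vertex w lab u ->
  (depth par u + cH (lab u) n <= max_length par)%N.
Proof.
case: F => [parlt [labn [lab0 [labinc [F3 F4]]]]] hu.
suff: forall d, (lab u + d <= n)%N -> exists x, [/\ honest_vertex w lab x, (lab x <= lab u + d)%N &
   (depth par u + cH (lab u) (lab u + d) <= depth par x)%N].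
  move=> h; have [x [_ _ hx]] : exists x, [/\ honest_vertex w lab x, (lab x <= lab u + (n - lab u))%N &
   (depth par u + cH (lab u) (lab u + (n - lab u)) <= depth par x)%N] by apply: h; rewrite subnKC ?labn.
  rewrite subnKC ?labn // in hx.
  exact: leq_trans hx (depth_le_max par x).
elim=> [|d IH] hd.
  by exists u; split; rewrite ?addn0 ?cH0 ?addn0.
have [x [hx lx dx]] : exists x, [/\ honest_vertex w lab x, (lab x <= lab u + d)%N & (depth par u + cH (lab u) (lab u + d) <= depth par x)%N] by apply: IH; lia.
rewrite addnS cH_last; last by lia.
rewrite /=.
case hw: (wbit w (lab u + d).+1) => /=.
  by exists x; split => //; rewrite ?addn0 //; apply: leq_trans lx _.
have hi : honest_idx w (lab u + d).+1 by rewrite /honest_idx hw andbT /= -addnS.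
have := F3 _ hi => /eqP; rewrite eqn_leq => /andP[_]; rewrite card_gt0 => /set0Pn [y].
rewrite inE => /eqP ly.
have y0 : y != ord0 by apply/eqP => h; move: ly; rewrite h lab0.
exists y; split; first by rewrite /honest_vertex ly hi orbT.
  by rewrite ly.
suff : (depth par x < depth par y)%N by lia.
case x0: (x == ord0).
  by rewrite (eqP x0) depth0 (depth_pos parlt y0).
apply: F4; first by move: hx; rewrite /honest_vertex x0.
  by rewrite ly.
by rewrite ly; lia.
Qed.

Lemma reach_le v : reach w par lab v <= Sn%:Z.
Proof.
have [u [hu lu du]] := up1 v.
have h2 := up2 hu.
have hm := depth_le_max par v.
case: F => [parlt [labn _]].
have := D_le_Sn (labn u).
rewrite /reach /gap (reserveE (labn v)) (@cA_split (lab u) (lab v) n); last by rewrite lu labn.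
lia.
Qed.

Lemma rhoF_le : rhoF w par lab <= Sn%:Z.
Proof.
rewrite /rhoF; apply: (big_ind (fun x => x <= Sn%:Z)) => //; first exact: reach_le.
  by move=> x y hx hy; rewrite ge_max hx hy.
by move=> v _; exact: reach_le.
Qed.
End ForkB.

Lemma le_rhoF m (par : 'I_m.+1 -> 'I_m.+1) lab v : reach w par lab v <= rhoF w par lab.
Proof. by rewrite /rhoF (bigD1 v) //= le_max lexx. Qed.

Definition hs := [seq i <- iota 1 n | ~~ wbit w i].
Definition mc := size hs.
Definition clab (j : 'I_mc.+1) := nth 0%N (0%N :: hs) j.
Definition cpar (j : 'I_mc.+1) : 'I_mc.+1 := inord j.-1.

Lemma hs_mem i : (i \in hs) = ~~ wbit w i && (0 < i <= n)%N.
Proof. by rewrite mem_filter mem_iota add1n. Qed.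

Lemma s0 : sorted ltn (0%N :: hs).
Proof.
change (path ltn 0%N hs); rewrite path_min_sorted.
  by apply: sorted_filter; [exact: ltn_trans | exact: iota_ltn_sorted].
by apply/allP => i; rewrite hs_mem => /andP[_ /andP[]].
Qed.

Lemma clab_mono (i j : 'I_mc.+1) : (i < j)%N -> (clab i < clab j)%N.
Proof.
move=> ij; apply: (sorted_ltn_nth ltn_trans 0%N s0) => //; rewrite inE /=; exact: ltn_ord.
Qed.

Lemma clab_honest (j : 'I_mc.+1) : j != ord0 -> honest_idx w (clab j).
Proof.
move=> j0; rewrite /honest_idx /clab; case: j j0 => [[|k] hk] //= _.
have : nth 0%N hs k \in hs by apply: mem_nth.
by rewrite hs_mem andbC.
Qed.

Lemma clab_le (j : 'I_mc.+1) : (clab j <= n)%N.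
Proof.
case j0: (j == ord0); first by rewrite (eqP j0).
by have := clab_honest (negbT j0); rewrite /honest_idx => /andP[/andP[]].
Qed.

Lemma cpar_val (j : 'I_mc.+1) : (cpar j : nat) = j.-1.
Proof. by rewrite /cpar /= inordK //; case: j => [[|k] hk] //=; apply: ltnW. Qed.

Lemma cparlt (v : 'I_mc.+1) : v != ord0 -> (cpar v < v)%N.
Proof. by rewrite cpar_val; case: v => [[|k] hk]. Qed.

Lemma cdepth (j : 'I_mc.+1) : depth cpar j = j.
Proof.
have: forall k (v : 'I_mc.+1), (v < k)%N -> depth cpar v = v; last by apply; apply: ltnSn.
elim=> [|k IH] v // hv.
case v0: (v == ord0); first by rewrite (eqP v0).
rewrite (depthE cparlt (negbT v0)) IH ?cpar_val; first by case: v v0 {hv} => [[|]].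
by case: v v0 hv => [[|k'] hk] //=.
Qed.

Lemma chain_fork : is_closed_fork w cpar clab.
Proof.
split; last first.
  move=> v; rewrite /is_leaf => /forallP hl.
  case v0: (v == ord0); first by rewrite /honest_vertex v0.
  rewrite /honest_vertex v0 clab_honest ?v0 //.
split; first exact: cparlt.
split; first exact: clab_le.
split; first by [].
split; first by move=> v v0; apply: clab_mono; apply: cparlt.
split.
  move=> i hi; apply/eqP/cards1P.
  have : i \in 0%N :: hs by rewrite inE hs_mem; move: hi; rewrite /honest_idx andbC => ->; rewrite orbT.
  move=> ih; have hlt : (index i (0%N :: hs) < mc.+1)%N by rewrite -[mc.+1]/(size (0%N :: hs)) index_mem.
  exists (Ordinal hlt); apply/setP => v; rewrite !inE /clab.
  apply/eqP/eqP => [h|->]; last by rewrite /= nth_index.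
  apply: val_inj; rewrite -[RHS]/(index i (0%N :: hs)) -h index_uniq //.
  by apply: (sorted_uniq (leT := ltn)) s0; [exact: ltn_trans | exact: ltnn].
move=> u v _ _ luv; rewrite !cdepth.
by rewrite ltnNge; apply/negP => vu; move: luv; rewrite ltnNge; case: ltngtP vu => // [vlt _|/val_inj ->]; rewrite ?leqnn // ltnW // clab_mono.
Qed.

Lemma cmax : max_length cpar = mc.
Proof.
apply/eqP; rewrite eqn_leq; apply/andP; split.
  by apply/bigmax_leqP => v _; rewrite cdepth -ltnS.
by have := depth_le_max cpar (@ord_max mc); rewrite cdepth.
Qed.

Lemma mcE : mc = cH 0 n.
Proof. by rewrite /mc /hs size_filter /cH subn0. Qed.

Lemma chain_reach a : (a <= n)%N ->
  exists v, (cA a n)%:Z - (cH a n)%:Z <= reach w cpar clab v.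
Proof.
move=> an.
pose j := cH 0 a.
have hsE : hs = [seq i <- iota 1 a | ~~ wbit w i] ++ [seq i <- iota (1 + a) (n - a) | ~~ wbit w i].
  by rewrite -filter_cat -iotaD subnKC.
have jE : j = size [seq i <- iota 1 a | ~~ wbit w i] by rewrite size_filter /j /cH subn0.
have jm : (j <= mc)%N by rewrite /mc hsE size_cat jE leq_addr.
have jlt : (j < mc.+1)%N by [].
exists (Ordinal jlt).
have lj : (clab (Ordinal jlt) <= a)%N.
  rewrite /clab /=; case: j jE {jm jlt} => [|j'] jE //=.
  rewrite hsE nth_cat -jE ltnSn.
  have : nth 0%N [seq i <- iota 1 a | ~~ wbit w i] j' \in [seq i <- iota 1 a | ~~ wbit w i].
    by apply: mem_nth; rewrite -jE.
  by rewrite mem_filter mem_iota add1n => /andP[_ /andP[_]]; rewrite ltnS.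
rewrite /reach /gap (reserveE (clab_le _)) cmax cdepth.
rewrite (@cA_split (clab (Ordinal jlt)) a n) ?lj ?an //.
have : mc = (j + cH a n)%N by rewrite mcE (@cH_split 0 a n).
rewrite [nat_of_ord _]/=.
lia.
Qed.

Lemma rhoF_chain : (Sn%:Z) <= rhoF w cpar clab.
Proof.
have [a ha] := @bigop.eq_bigmax _ (fun a : 'I_n.+1 => (cA a n - cH a n)%N) (ltac:(by rewrite card_ord)).
rewrite /Sn ha.
case: (leqP (cH a n) (cA a n)) => h.
  have [v hv] := chain_reach (ltnSE (ltn_ord a)).
  apply: le_trans (le_rhoF _ _ v); apply: le_trans hv; lia.
have [v hv] := chain_reach (leqnn n).
apply: le_trans (le_rhoF _ _ v); apply: le_trans hv; rewrite cA0 cH0; lia.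
Qed.

Lemma rhoE (R : realType) : rho R w = (Sn%:R : R).
Proof.
rewrite /rho.
set E := (X in sup X).
have ub : ubound E (Sn%:R).
  move=> x [m [par [lab [[Fk _] ->]]]].
  by rewrite -[_%:R]/((Sn%:Z)%:~R) ler_int rhoF_le.
have inE : E (Sn%:R).
  exists mc, cpar, clab; split; first exact: chain_fork.
  apply/eqP; rewrite eq_le; apply/andP; split.
    by rewrite -[_%:R]/((Sn%:Z)%:~R) ler_int rhoF_chain.
  by rewrite -[_%:R]/((Sn%:Z)%:~R) ler_int rhoF_le //; case: chain_fork.
apply/eqP; rewrite eq_le; apply/andP; split.
  by apply: ge_sup => //; exists Sn%:R.
by apply: ub_le_sup => //; exists Sn%:R.
Qed.
End Comb.


Section Dom.
Variable R : realType.

Lemma sum_cons n (P : pred (n.+1.-tuple bool)) (F : n.+1.-tuple bool -> R) :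
  \sum_(w | P w) F w =
  \sum_(b : bool) \sum_(t : n.-tuple bool | P [tuple of b :: t]) F [tuple of b :: t].
Proof.
pose h (bt : bool * n.-tuple bool) : n.+1.-tuple bool := [tuple of bt.1 :: bt.2].
pose g (w : n.+1.-tuple bool) : bool * n.-tuple bool := (thead w, [tuple of behead w]).
rewrite (reindex h) /=; last first.
  exists g => [[b t] _|w _].
    by congr pair; apply: val_inj.
  by rewrite /h /g /=; apply/esym/tuple_eta.
by rewrite pair_big_dep.
Qed.

Lemma sum_tuple0 (F : 0.-tuple bool -> R) : \sum_(w : 0.-tuple bool) F w = F [tuple].
Proof. by rewrite (big_pred1 [tuple]) // => t; apply/esym/eqP/tuple0. Qed.

Lemma B_cons (eps : R) n b (t : n.-tuple bool) :
  B_law_pmf eps [tuple of b :: t] = (if b then (1 - eps) / 2 else 1 - (1 - eps) / 2) * B_law_pmf eps t.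
Proof.
by rewrite /B_law_pmf big_ord_recl tnth0; congr (_ * _); apply: eq_bigr => i _; rewrite tnthS.
Qed.

Lemma B_ge0 (eps : R) n (t : n.-tuple bool) : 0 < eps < 1 -> 0 <= B_law_pmf eps t.
Proof.
move=> he; rewrite /B_law_pmf; apply: prodr_ge0 => i _; case: (tnth t i); lra.
Qed.

Lemma pp_cons n (p : n.+1.-tuple bool -> R) b x :
  prefix_prob (fun t : n.-tuple bool => p [tuple of b :: t]) x = prefix_prob p (b :: x).
Proof.
rewrite /prefix_prob sum_cons big_bool /=.
case: b => /=.
  by rewrite [X in _ + X]big_pred0 ?addr0 // => t; rewrite eqseq_cons.
by rewrite [X in X + _]big_pred0 ?add0r // => t; rewrite eqseq_cons.
Qed.

Lemma pp_nil n (p : n.-tuple bool -> R) : prefix_prob p [::] = \sum_w p w.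
Proof. by rewrite /prefix_prob; apply: eq_bigl => w; rewrite take0. Qed.

Definition mart n q (p : n.-tuple bool -> R) := forall x : seq bool, (size x < n)%N ->
    prefix_prob p (rcons x true) <= q * prefix_prob p x.

Definition monog n (g : n.-tuple bool -> R) := forall w w' : n.-tuple bool,
  (forall i, tnth w i ==> tnth w' i) -> g w <= g w'.

Lemma dom (eps : R) n (p g : n.-tuple bool -> R) : 0 < eps < 1 ->
  mart ((1 - eps) / 2) p -> monog g ->
  \sum_w p w * g w <= (\sum_w p w) * \sum_w B_law_pmf eps w * g w.
Proof.
move=> he; elim: n p g => [|n IH] p g hp hg.
  by rewrite !sum_tuple0 /B_law_pmf big_ord0 mul1r.
set q := (1 - eps) / 2.
pose pb b (t : n.-tuple bool) := p [tuple of b :: t].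
pose gb b (t : n.-tuple bool) := g [tuple of b :: t].
have hpb b : mart q (pb b).
  move=> x hx; rewrite !pp_cons -rcons_cons; apply: hp => /=; lia.
have hgb b : monog (gb b).
  move=> t t' htt; apply: hg => i; case: (unliftP ord0 i) => [j ->|->].
    by rewrite !tnthS.
  by rewrite !tnth0 implybb.
have IH1 := IH (pb true) (gb true) (hpb true) (hgb true).
have IH0 := IH (pb false) (gb false) (hpb false) (hgb false).
have h0 : (\sum_t pb true t) <= q * (\sum_t pb true t + \sum_t pb false t).
  have := hp [::] isT; rewrite -[rcons [::] true]/[:: true] -pp_cons pp_nil pp_nil sum_cons big_bool /=.
  by [].
set G1 := \sum_t B_law_pmf eps t * gb true t.
set G0 := \sum_t B_law_pmf eps t * gb false t.
have G10 : G0 <= G1.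
  apply: ler_sum => t _; apply: ler_wpM2l; first exact: B_ge0.
  by apply: hg => i; case: (unliftP ord0 i) => [j ->|->]; rewrite ?tnthS ?tnth0 ?implybb.
have E1 : \sum_w p w * g w = \sum_t pb true t * gb true t + \sum_t pb false t * gb false t.
  by rewrite sum_cons big_bool.
have E2 : \sum_w p w = \sum_t pb true t + \sum_t pb false t.
  by rewrite sum_cons big_bool.
have E3 : \sum_w B_law_pmf eps w * g w = q * G1 + (1 - q) * G0.
  rewrite sum_cons big_bool /G1 /G0 !mulr_sumr; congr (_ + _); apply: eq_bigr => t _;
  by rewrite B_cons mulrA.
rewrite E1 E2 E3.
set P1 := \sum_t pb true t in h0 IH1 *.
set P0 := \sum_t pb false t in h0 IH0 *.
have hh : 0 <= (G1 - G0) * (q * (P1 + P0) - P1) by apply: mulr_ge0; rewrite subr_ge0.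
rewrite -/G1 in IH1; rewrite -/G0 in IH0.
nra.
Qed.
End Dom.


Section Ser.
Variable R : realType.
Local Open Scope classical_set_scope.

Lemma Rinf_tail_ge (eps L : R) k0 : 0 < eps < 1 ->
  (forall k : nat, (L <= k%:R) = (k0 <= k)%N) ->
  ((((1 - eps) / (1 + eps)) ^+ k0)%:E <= Rinf_tail eps L)%E.
Proof.
move=> he hL.
set b := (1 - eps) / (1 + eps).
pose r N := \sum_(0 <= i < N) (if (k0 <= i)%N then Rinf_pmf eps i else 0).
have -> : Rinf_tail eps L = limn (EFin \o r).
  apply/congr_lim/funext => N /=; rewrite sumEFin /r big_mkcond /=.
  by congr EFin; apply: eq_bigr => i _; rewrite hL.
have pmfE i : Rinf_pmf eps i = b ^+ i - b ^+ i.+1.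
  rewrite /Rinf_pmf exprS -/b.
  have -> : 2 * eps / (1 + eps) = 1 - b by rewrite /b; field; lra.
  ring.
have r0 N : (N <= k0)%N -> r N = 0.
  move=> hN; rewrite /r big1_seq // => i; rewrite mem_iota add0n => /andP[_ hi].
  by rewrite subn0 in hi; rewrite leqNgt (leq_trans hi hN).
have rE d : r (k0 + d)%N = b ^+ k0 - b ^+ (k0 + d).
  elim: d => [|d IH]; first by rewrite addn0 r0 // subrr.
  rewrite /r addnS big_nat_recr //= -/(r _) IH leq_addr pmfE; lra.
have hr : r @ \oo --> b ^+ k0.
  apply: (cvg_trans (near_eq_cvg (f := fun N => b ^+ k0 - b ^+ N) _)).
    near=> N; have : (k0 <= N)%N by near: N; apply: nbhs_infty_ge.
    by move/subnKC <-; rewrite rE.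
  have hb : `|b| < 1.
    by rewrite ger0_norm /b; [rewrite ltr_pdivrMr; lra | apply: divr_ge0; lra].
  have := cvgB (cvg_cst (b ^+ k0)) (cvg_expr hb); rewrite subr0; apply.
rewrite EFin_lim; last exact: (cvgP _ hr).
by rewrite (cvg_lim _ hr).
Unshelve. all: by end_near.
Qed.
End Ser.


Lemma wbit_mono n (w w' : n.-tuple bool) : (forall i, tnth w i ==> tnth w' i) ->
  forall k, wbit w k ==> wbit w' k.
Proof.
move=> h k; rewrite /wbit; case: (ltnP k.-1 n) => hk.
  by have := h (Ordinal hk); rewrite !(tnth_nth false).
by rewrite !nth_default ?size_tuple.
Qed.

Lemma Sn_mono n (w w' : n.-tuple bool) : (forall i, tnth w i ==> tnth w' i) ->
  (Sn w <= Sn w')%N.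
Proof.
move=> h; have hw := wbit_mono h.
apply/bigmax_leqP => a _; apply: leq_trans (leq_bigmax a).
apply: leq_sub; apply: sub_count => k /=.
  by move/(implyP (hw k)).
by apply: contra => /(implyP (hw k)).
Qed.

Section Tail.
Variable R : realType.

Lemma sum_rcons n (P : pred (n.+1.-tuple bool)) (F : n.+1.-tuple bool -> R) :
  \sum_(w | P w) F w =
  \sum_(b : bool) \sum_(t : n.-tuple bool | P [tuple of rcons t b]) F [tuple of rcons t b].
Proof.
pose h (bt : bool * n.-tuple bool) : n.+1.-tuple bool := [tuple of rcons bt.2 bt.1].
pose g (w : n.+1.-tuple bool) : bool * n.-tuple bool :=
  (last (thead w) (behead w), [tuple of belast (thead w) [tuple of behead w]]).
have hg w : h (g w) = w.
  apply: val_inj; rewrite /h /g /= -lastI.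
  exact: (esym (congr1 val (tuple_eta w))).
rewrite (reindex h) /=; last first.
  exists g => [[b t] _|w _]; last exact: hg.
  have := hg (h (b, t)); move/(congr1 val) => /= /rcons_inj [e1 e2].
  by congr pair => //; apply: val_inj.
by rewrite pair_big_dep.
Qed.

Lemma B_rcons (eps : R) n b (t : n.-tuple bool) :
  B_law_pmf eps [tuple of rcons t b] = B_law_pmf eps t * (if b then (1 - eps) / 2 else 1 - (1 - eps) / 2).
Proof.
rewrite /B_law_pmf big_ord_recr /=; congr (_ * _).
  apply: eq_bigr => i _; rewrite !(tnth_nth false) /= nth_rcons size_tuple.
  by rewrite ltn_ord.
by rewrite (tnth_nth false) /= nth_rcons size_tuple ltnn eqxx.
Qed.

Lemma wbit_rc n (t : n.-tuple bool) b k : (0 < k <= n)%N ->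
  wbit [tuple of rcons t b] k = wbit t k.
Proof. by move=> /andP[k0 kn]; rewrite /wbit /= nth_rcons size_tuple ifT //; lia. Qed.

Lemma wbit_rl n (t : n.-tuple bool) b : wbit [tuple of rcons t b] n.+1 = b.
Proof. by rewrite /wbit /= nth_rcons size_tuple ltnn eqxx. Qed.

Lemma cA_rc n (t : n.-tuple bool) b a : cA [tuple of rcons t b] a n = cA t a n.
Proof.
apply: eq_in_count => i; rewrite mem_iota => /andP[h1 h2]; apply: wbit_rc; lia.
Qed.

Lemma cH_rc n (t : n.-tuple bool) b a : cH [tuple of rcons t b] a n = cH t a n.
Proof.
apply: eq_in_count => i; rewrite mem_iota => /andP[h1 h2] /=; rewrite wbit_rc //; lia.
Qed.

Lemma Sn_rc n (t : n.-tuple bool) b :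
  (Sn [tuple of rcons t b] <= if b then (Sn t).+1 else (Sn t).-1)%N.
Proof.
apply/bigmax_leqP => a _.
case: (ltnP a n.+1) => ha.
  rewrite cA_last // cH_last // /= cA_rc cH_rc wbit_rl.
  have := @leq_bigmax _ (fun a : 'I_n.+1 => (cA t a n - cH t a n)%N) (Ordinal ha).
  rewrite -/(Sn t) /=; case: b; lia.
have -> : (a : nat) = n.+1 by have := ltn_ord a; lia.
by rewrite cA0 cH0.
Qed.

Lemma ind_le (A B : bool) : (A -> B) -> (if A then 1 else 0 : R) <= (if B then 1 else 0).
Proof. by case: A; case: B => // /(_ isT). Qed.

Lemma aux (x c y z : R) : 0 <= x * c * (y - z) -> x * c * z <= c * (x * y).
Proof. move=> h; rewrite -subr_ge0; apply: (le_trans h); rewrite le_eqVlt; apply/orP; left; apply/eqP; ring. Qed.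

Lemma tail (eps : R) n k : 0 < eps < 1 ->
  \sum_(w : n.-tuple bool) B_law_pmf eps w * (if (k <= Sn w)%N then 1 else 0)
   <= ((1 - eps) / (1 + eps)) ^+ k.
Proof.
move=> he; set b := (1 - eps) / (1 + eps).
have b0 : 0 <= b by apply: divr_ge0; lra.
elim: n k => [|n IH] k.
  rewrite sum_tuple0 /B_law_pmf big_ord0 mul1r.
  have -> : Sn [tuple] = 0%N.
    by apply/eqP; rewrite -leqn0; apply/bigmax_leqP => a _; rewrite /cA /cH sub0n.
  by case: k => [|k] /=; rewrite ?expr0 // exprn_ge0.
set q := (1 - eps) / 2.
have q0 : 0 <= q by rewrite /q; lra.
have q1 : 0 <= 1 - q by rewrite /q; lra.
rewrite sum_rcons big_bool /=.
have S1 : \sum_(t : n.-tuple bool) B_law_pmf eps [tuple of rcons t true] * (if (k <= Sn [tuple of rcons t true])%N then 1 else 0)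
   <= q * \sum_(t : n.-tuple bool) B_law_pmf eps t * (if (k.-1 <= Sn t)%N then 1 else 0).
  rewrite mulr_sumr; apply: ler_sum => t _; rewrite B_rcons /=.
  have hi : (if (k <= Sn [tuple of rcons t true])%N then 1 else 0 : R) <= (if (k.-1 <= Sn t)%N then 1 else 0).
    apply: ind_le => h; have := leq_trans h (Sn_rc t true); rewrite /=.
    by move: (Sn t) => s; case: (k) => //.
  rewrite -subr_ge0 in hi; exact: aux (mulr_ge0 (mulr_ge0 (B_ge0 t he) q0) hi).
have S0 : \sum_(t : n.-tuple bool) B_law_pmf eps [tuple of rcons t false] * (if (k <= Sn [tuple of rcons t false])%N then 1 else 0)
   <= (1 - q) * \sum_(t : n.-tuple bool) B_law_pmf eps t * (if ((if k == 0%N then 0 else k.+1) <= Sn t)%N then 1 else 0).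
  rewrite mulr_sumr; apply: ler_sum => t _; rewrite B_rcons /=.
  have hi : (if (k <= Sn [tuple of rcons t false])%N then 1 else 0 : R) <= (if ((if k == 0%N then 0 else k.+1) <= Sn t)%N then 1 else 0).
    apply: ind_le => h; have := leq_trans h (Sn_rc t false); rewrite /=.
    move: (Sn t) => s; case: (k) => //= k'; lia.
  rewrite -subr_ge0 in hi; exact: aux (mulr_ge0 (mulr_ge0 (B_ge0 t he) q1) hi).
apply: le_trans (lerD S1 S0) _.
apply: le_trans (lerD (ler_wpM2l q0 (IH _)) (ler_wpM2l q1 (IH _))) _.
case: k {S1 S0} => [|k] /=.
  by rewrite !expr0; lra.
have hb : q + (1 - q) * b ^+ 2 = b by rewrite /q /b; field; lra.
rewrite -subr_ge0 (_ : _ - _ = b ^+ k * (b - (q + (1 - q) * b ^+ 2))); first by rewrite hb subrr mulr0.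
rewrite !exprS; ring.
Qed.
End Tail.


Theorem lemma4 (R : realType) (eps : R) (n : nat) (pW : n.-tuple bool -> R) :
  0 < eps < 1 ->
  is_pmf pW ->
  martingale_cond eps pW ->
  forall L : R,
    rho_tail pW L <= rho_tail (@B_law_pmf R eps n) L /\
    ((rho_tail (@B_law_pmf R eps n) L)%:E <= Rinf_tail eps L)%E.
Proof.
move=> he [p0 p1] hmart L.
pose gL := fun w : n.-tuple bool => (if L <= (Sn w)%:R then 1 else 0 : R).
have tailE p : rho_tail p L = \sum_w p w * gL w.
  rewrite /rho_tail big_mkcond; apply: eq_bigr => w _; rewrite rhoE /gL.
  by case: ifP => _; rewrite ?mulr1 ?mulr0.
have mg : monog gL.
  move=> w w' h; rewrite /gL; apply: ind_le => hl; apply: (le_trans hl).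
  by rewrite ler_nat; apply: Sn_mono.
split.
  rewrite !tailE; have := dom he hmart mg; rewrite p1 mul1r; exact.
have exk : exists k : nat, L <= k%:R.
  exists (Num.bound `|L|); apply: le_trans (ler_norm L) _.
  by apply/ltW/archi_boundP.
case: (ex_minnP exk) => k0 hk0 hmin.
have hL k : (L <= k%:R) = (k0 <= k)%N.
  apply/idP/idP; first exact: hmin.
  by move=> hk; apply: (le_trans hk0); rewrite ler_nat.
apply: le_trans (Rinf_tail_ge he hL); rewrite lee_fin tailE.
rewrite (eq_bigr (fun w => B_law_pmf eps w * (if (k0 <= Sn w)%N then 1 else 0))).
  exact: tail.
by move=> w _; rewrite /gL hL.
Qed.
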